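(* Let $D$ be an oriented graph and let $u$ be a vertex of $D$ of maximum score. Then every vertex $v \neq u$ of $D$ is weakly reachable within two steps from $u$.
   Context: An oriented graph is a digraph with no loops and no pair of symmetric arcs. For vertices $u,v$ write $u(1\text{-}0)v$ if there is an arc from $u$ to $v$, $u(0\text{-}1)v$ if there is an arc from $v$ to $u$, and $u(0\text{-}0)v$ if there is no arc between $u$ and $v$. If $D$ has $n$ vertices, the score of a vertex $v$ is $s(v) = n-1+d^+(v)-d^-(v)$, where $d^+(v), d^-(v)$ are the out- and indegree of $v$; equivalently $s(v)=2d^+(v)+d^*(v)$ where $d^*(v)$ is the number of vertices $w$ with $v(0\text{-}0)w$. A vertex $v$ is weakly reachable within two steps from $u$ if $u(1\text{-}0)v$, or $u(0\text{-}0)v$, or for some vertex $w$ one has $u(1\text{-}0)w(1\text{-}0)v$, or $u(1\text{-}0)w(0\text{-}0)v$, or $u(0\text{-}0)w(1\text{-}0)v$. *)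

(* Defs.v *)
From mathcomp Require Import all_boot.
Set Implicit Arguments. Unset Strict Implicit. Unset Printing Implicit Defensive.

Definition oriented (T : finType) (a : rel T) : Prop :=
  (forall v, ~~ a v v) /\ (forall u v, a u v -> ~~ a v u).

Definition nonadj (T : finType) (a : rel T) (u v : T) : bool :=
  [&& u != v, ~~ a u v & ~~ a v u].

Definition outdeg (T : finType) (a : rel T) (v : T) : nat := #|[set w | a v w]|.
Definition indeg (T : finType) (a : rel T) (v : T) : nat := #|[set w | a w v]|.

(* score s(v) = n - 1 + d^+(v) - d^-(v), computed in int to avoid truncation
   (it is always a nonnegative integer). *)
From mathcomp Require Import all_order all_algebra.
Definition score (T : finType) (a : rel T) (v : T) : int :=
  (#|T|.-1)%:Z + (outdeg a v)%:Z - (indeg a v)%:Z.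

Definition weakly_reach2 (T : finType) (a : rel T) (u v : T) : Prop :=
  a u v \/ nonadj a u v \/
  exists w, [|| a u w && a w v, a u w && nonadj a w v | nonadj a u w && a w v].

(* Main.v *)
Require Import Defs.
From mathcomp Require Import all_boot all_order all_algebra.
From mathcomp Require Import zify.
Import Order.TTheory GRing.Theory Num.Theory.

Theorem theorem4 (T : finType) (a : rel T) (u : T) :
  oriented a ->
  (forall x : T, (score a x <= score a u)%R) ->
  forall v : T, v != u -> weakly_reach2 a u v.
Proof.
move=> [irr asym] Hmax v vu.
rewrite /weakly_reach2.
case Huv: (a u v); first by left.
case Hn: (nonadj a u v); first by right; left.
case Hex: [exists w, [|| a u w && a w v, a u w && nonadj a w v | nonadj a u w && a w v]].
  by move/existsP: Hex => [w Hw]; right; right; exists w.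
exfalso.
have Hvu : a v u by move: Hn; rewrite /nonadj Huv eq_sym vu /=; case: (a v u).
have Hw : forall w, ~~ ([|| a u w && a w v, a u w && nonadj a w v | nonadj a u w && a w v]).
  by move=> w; apply/negP => H; suff: false by []; rewrite -Hex; apply/existsP; exists w.
have Hout : [set w | a u w] \subset [set w | a v w].
  apply/subsetP => w; rewrite !inE => Huw.
  have := Hw w; rewrite Huw /= /nonadj.
  case: (a v w) => //.
  case: (a w v) => //=.
  rewrite andbT andbF orbF negbK => /eqP wv; by rewrite -wv Huw in Huv.
have Hin : [set w | a w v] \proper [set w | a w u].
  apply/properP; split; last by exists v; rewrite !inE ?Hvu ?irr.
  apply/subsetP => w; rewrite !inE => Hwv.
  have := Hw w; rewrite Hwv /= /nonadj !andbT.
  case Huw: (a u w).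
    by have := asym _ _ Huw; have : a v w by move/subsetP: Hout => /(_ w); rewrite !inE; apply.
  case: (a w u) => //=.
  rewrite andbT negbK => /eqP uw; by move: Hwv; rewrite -uw Huv.
have H1 := subset_leq_card Hout.
have H2 := proper_card Hin.
have := Hmax v.
rewrite /score /outdeg /indeg.
lia.
Qed.
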